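(* Let $(X,D)$ be an $\mathcal{F}$-metric space with respect to some $(f,\alpha)\in\mathcal{F}\times[0,\infty)$. Then the topological space $(X,\tau_{\mathcal{F}})$ is metrizable, i.e. there is a metric $d$ on $X$ whose metric topology equals $\tau_{\mathcal{F}}$.
   Context: $\mathcal{F}$ denotes the class of functions $f:(0,\infty)\to\mathbb{R}$ such that ($\mathcal{F}_1$) $f$ is non-decreasing, and ($\mathcal{F}_2$) for every sequence $(t_n)\subseteq(0,\infty)$, $\lim_n t_n=0$ iff $\lim_n f(t_n)=-\infty$. An $\mathcal{F}$-metric on a non-empty set $X$ is a map $D:X\times X\to[0,\infty)$ for which there exists $(f,\alpha)\in\mathcal{F}\times[0,\infty)$ such that: (D1) $D(x,y)=0$ iff $x=y$; (D2) $D(x,y)=D(y,x)$ for all $x,y$; (D3) for all $(x,y)\in X\times X$, every integer $N\ge2$ and every $u_1,\dots,u_N\in X$ with $u_1=x$, $u_N=y$: if $D(x,y)>0$ then $f(D(x,y))\le f\big(\sum_{i=1}^{N-1}D(u_i,u_{i+1})\big)+\alpha$. The pair $(X,D)$ is an $\mathcal{F}$-metric space. The topology $\tau_{\mathcal{F}}$ consists of all $C\subseteq X$ such that for every $x\in C$ there is $r>0$ with $B(x,r)=\{y\in X: D(y,x)<r\}\subseteq C$. *)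

(* Defs.v *)
From Stdlib Require Import Reals List.
Open Scope R_scope.

Definition tends_to_minus_infty (u : nat -> R) : Prop :=
  forall M : R, exists N : nat, forall n : nat, (n >= N)%nat -> u n < M.

(* The class F of functions f : (0,oo) -> R, represented as total functions
   R -> R whose values are only used on (0,oo). *)
Definition classF (f : R -> R) : Prop :=
  (forall s t : R, 0 < s -> s <= t -> f s <= f t) /\
  (forall t : nat -> R, (forall n, 0 < t n) ->
     (Un_cv t 0 <-> tends_to_minus_infty (fun n => f (t n)))).

Fixpoint chain_sum {X : Type} (D : X -> X -> R) (x : X) (l : list X) : R :=
  match l with
  | nil => 0
  | y :: l' => D x y + chain_sum D y l'
  end.

(* D is an F-metric on X w.r.t. (f, alpha).  A chain u_1 = x, ..., u_N = y
   with N >= 2 is encoded as x :: mid ++ [y], mid arbitrary. *)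
Definition is_F_metric {X : Type} (D : X -> X -> R) (f : R -> R) (alpha : R)
  : Prop :=
  classF f /\ 0 <= alpha /\
  (forall x y, 0 <= D x y) /\
  (forall x y, D x y = 0 <-> x = y) /\
  (forall x y, D x y = D y x) /\
  (forall (x y : X) (mid : list X), 0 < D x y ->
      f (D x y) <= f (chain_sum D x (mid ++ y :: nil)) + alpha).

Definition F_open {X : Type} (D : X -> X -> R) (C : X -> Prop) : Prop :=
  forall x, C x -> exists r, 0 < r /\ (forall y, D y x < r -> C y).

Definition is_metric {X : Type} (d : X -> X -> R) : Prop :=
  (forall x y, 0 <= d x y) /\
  (forall x y, d x y = 0 <-> x = y) /\
  (forall x y, d x y = d y x) /\
  (forall x y z, d x z <= d x y + d y z).

Definition metric_open {X : Type} (d : X -> X -> R) (C : X -> Prop) : Prop :=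
  forall x, C x -> exists r, 0 < r /\ (forall y, d x y < r -> C y).

(* Main.v *)
Require Import Defs.
From Stdlib Require Import Reals List Lra Classical.
Open Scope R_scope.

Section Aux.
Context {X : Type} (D : X -> X -> R).

Lemma cs_app (x z : X) (l l' : list X) :
  chain_sum D x (l ++ z :: l') = chain_sum D x (l ++ z :: nil) + chain_sum D z l'.
Proof.
  revert x; induction l as [|a l IH]; intros x; simpl.
  - lra.
  - rewrite IH. lra.
Qed.

Lemma cs_rev (Hs : forall x y, D x y = D y x) (x y : X) (mid : list X) :
  chain_sum D x (mid ++ y :: nil) = chain_sum D y (rev mid ++ x :: nil).
Proof.
  revert x; induction mid as [|a m IH]; intros x; simpl.
  - rewrite Hs; lra.
  - rewrite IH. rewrite <- app_assoc. simpl. rewrite (cs_app y a (rev m) (x :: nil)). simpl. rewrite (Hs x a). lra.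
Qed.

Lemma cs_nonneg (Hn : forall x y, 0 <= D x y) (x : X) (l : list X) :
  0 <= chain_sum D x l.
Proof.
  revert x; induction l as [|a l IH]; intros x; simpl.
  - lra.
  - specialize (IH a); specialize (Hn x a); lra.
Qed.

Lemma cs_zero (Hn : forall x y, 0 <= D x y) (Hz : forall x y, D x y = 0 <-> x = y)
  (x y : X) (l : list X) :
  chain_sum D x (l ++ y :: nil) = 0 -> x = y.
Proof.
  revert x; induction l as [|a l IH]; intros x; simpl; intros H.
  - apply Hz; lra.
  - pose proof (cs_nonneg Hn a (l ++ y :: nil)). pose proof (Hn x a).
    assert (D x a = 0) by lra. apply Hz in H2. subst a. apply IH. lra.
Qed.
End Aux.

Theorem mainTheorem2 (X : Type) (D : X -> X -> R) (f : R -> R) (alpha : R) :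
  is_F_metric D f alpha ->
  exists d : X -> X -> R, is_metric d /\
    (forall C : X -> Prop, metric_open d C <-> F_open D C).
Proof.
  intros [[Hmon HF2] [Ha [Hn [Hz [Hs Htri]]]]].
  assert (key : forall e, 0 < e -> exists del, 0 < del /\
     forall x y mid, chain_sum D x (mid ++ y :: nil) < del -> D x y < e).
  { intros e He.
    assert (Hpos : forall n, 0 < 1 / 2 ^ n).
    { intros n. apply Rdiv_lt_0_compat; [lra| apply pow_lt; lra]. }
    destruct (proj1 (HF2 (fun n => 1 / 2 ^ n) Hpos) (cv_pow_half 1) (f e - alpha))
      as [N HN].
    specialize (HN N (le_n N)). simpl in HN.
    exists (1 / 2 ^ N). split; [apply Hpos|].
    intros x y mid Hlt.
    set (s := chain_sum D x (mid ++ y :: nil)) in *.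
    destruct (Rle_lt_dec (D x y) 0) as [H0|H0].
    - lra.
    - assert (Hs0 : 0 < s).
      { pose proof (cs_nonneg D Hn x (mid ++ y :: nil)).
        destruct (Req_dec s 0) as [E|E].
        + apply cs_zero in E; auto. subst y. rewrite (proj2 (Hz x x) eq_refl) in H0. lra.
        + fold s in H. lra. }
      pose proof (Htri x y mid H0). fold s in H.
      pose proof (Hmon s (1 / 2 ^ N) Hs0 (Rlt_le _ _ Hlt)).
      destruct (Rlt_le_dec (D x y) e) as [G|G]; auto.
      pose proof (Hmon e (D x y) He G). lra. }
  set (E := fun x y v => exists mid, v = - chain_sum D x (mid ++ y :: nil)).
  assert (bnd : forall x y, bound (E x y)).
  { intros x y. exists 0. intros v [mid ->].
    pose proof (cs_nonneg D Hn x (mid ++ y :: nil)). lra. }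
  assert (ne : forall x y, exists v, E x y v).
  { intros x y. exists (- chain_sum D x (nil ++ y :: nil)). exists nil. reflexivity. }
  set (L := fun x y => proj1_sig (completeness (E x y) (bnd x y) (ne x y))).
  assert (HL : forall x y, is_lub (E x y) (L x y)).
  { intros x y. unfold L. destruct (completeness (E x y) (bnd x y) (ne x y)); auto. }
  set (d := fun x y => - L x y).
  assert (dleD : forall x y, d x y <= D x y).
  { intros x y. unfold d. destruct (HL x y) as [H1 _].
    assert (E x y (- D x y)) by (exists nil; simpl; lra).
    apply H1 in H. lra. }
  assert (d0 : forall x y, 0 <= d x y).
  { intros x y. unfold d. destruct (HL x y) as [_ H2].
    assert (L x y <= 0); [|lra]. apply H2. intros v [mid ->].
    pose proof (cs_nonneg D Hn x (mid ++ y :: nil)). lra. }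
  assert (approx : forall x y e, 0 < e -> exists mid,
             chain_sum D x (mid ++ y :: nil) < d x y + e).
  { intros x y e He. apply NNPP. intros Hno.
    destruct (HL x y) as [_ H2].
    assert (L x y <= L x y - e); [|lra].
    apply H2. intros v [mid ->].
    destruct (Rlt_le_dec (chain_sum D x (mid ++ y :: nil)) (d x y + e)) as [G|G].
    - exfalso; apply Hno; exists mid; auto.
    - unfold d in G. lra. }
  assert (dsym1 : forall x y, d x y <= d y x).
  { intros x y. unfold d. assert (L y x <= L x y); [|lra].
    destruct (HL y x) as [_ H2]. apply H2. intros v [mid ->].
    destruct (HL x y) as [H1 _]. apply H1. exists (rev mid).
    rewrite (cs_rev D Hs y x mid). reflexivity. }
  exists d. split.
  - split; [exact d0|]. split; [|split].
    + intros x y; split; intros H.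
      * apply NNPP; intros Hxy.
        assert (Hp : 0 < D x y).
        { destruct (Hn x y) as [G|G]; auto. exfalso; apply Hxy, Hz; auto. }
        destruct (key _ Hp) as [del [Hd Hk]].
        destruct (approx x y del Hd) as [mid Hm].
        specialize (Hk x y mid ltac:(lra)). lra.
      * subst y. pose proof (dleD x x). pose proof (d0 x x).
        rewrite (proj2 (Hz x x) eq_refl) in H. lra.
    + intros x y. pose proof (dsym1 x y); pose proof (dsym1 y x); lra.
    + intros x y z.
      apply Rnot_lt_le; intros Hlt.
      set (e := (d x z - d x y - d y z) / 3).
      assert (He : 0 < e) by (unfold e; lra).
      destruct (approx x y e He) as [m1 H1].
      destruct (approx y z e He) as [m2 H2].
      destruct (HL x z) as [Hu _].
      assert (Hin : E x z (- chain_sum D x ((m1 ++ y :: m2) ++ z :: nil))).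
      { exists (m1 ++ y :: m2). reflexivity. }
      apply Hu in Hin.
      rewrite <- app_assoc in Hin. simpl in Hin. rewrite cs_app in Hin.
      unfold d in *. unfold e in *. lra.
  - intros C; split; intros H x Cx.
    + destruct (H x Cx) as [r [Hr Hb]]. exists r; split; auto.
      intros y Hy. apply Hb. pose proof (dleD x y). rewrite Hs in Hy. lra.
    + destruct (H x Cx) as [r [Hr Hb]].
      destruct (key r Hr) as [del [Hd Hk]].
      exists del; split; auto. intros y Hy.
      destruct (approx x y (del - d x y) ltac:(lra)) as [mid Hm].
      apply Hb. rewrite Hs. apply (Hk x y mid). lra.
Qed.
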